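(* Let $n\ge1$. The Priestley power functor $\mathfrak P\colon\mathsf{DL}\to\mathsf{PMV}_n$ is right adjoint to the distributive skeleton functor $\mathfrak S\colon\mathsf{PMV}_n\to\mathsf{DL}$.
   Context: For $n\ge 1$, the algebra $\mathbf{P\L}_n=\langle\{0,\tfrac1n,\dots,1\},\min,\max,\odot,\oplus,0,1\rangle$ has $x\odot y=\max\{0,x+y-1\}$ and $x\oplus y=\min\{1,x+y\}$. $\mathsf{PMV}_n$ is the variety it generates, and $\mathsf{DL}$ is the category of bounded distributive lattices. - Priestley duality gives $D(\mathbf L)=\mathsf{DL}(\mathbf L,\mathbf 2)$, with pointwise order and product topology, and $Dh=-\circ h$. - The distributive skeleton is $\mathfrak S(\mathbf A)=\langle\{a\in A:a\oplus a=a\},\wedge,\vee,0,1\rangle$, and $\mathfrak S h=h|_{\mathfrak S(\mathbf A)}$. - The Priestley power is $\mathfrak P(\mathbf L)=\mathbf{P\L}_n[\mathbf L]$, the set of continuous order-preserving maps from $D(\mathbf L)$ to the discrete ordered space $\langle\{0,\tfrac1n,\dots,1\},\le\rangle$, with pointwise operations. It is a $\mathsf{PMV}_n$-algebra. - For a lattice homomorphism $h\colon\mathbf L_1\to\mathbf L_2$, $\mathfrak P h\colon\mathfrak P(\mathbf L_1)\to\mathfrak P(\mathbf L_2)$ is $\alpha\mapsto\alpha\circ Dh$. *)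

(* Defs.v *)
From mathcomp Require Import all_boot.
From mathcomp Require Import zify.
From Stdlib Require List.

Set Implicit Arguments.
Unset Strict Implicit.
Unset Printing Implicit Defensive.

Inductive term : Type :=
  | tVar of nat
  | tMin of term & term
  | tMax of term & term
  | tOdot of term & term
  | tOplus of term & term
  | tZero
  | tOne.

Section Eval.
Variables (T : Type) (mn mx od op : T -> T -> T) (z o : T) (v : nat -> T).
Fixpoint teval (t : term) : T :=
  match t with
  | tVar i => v i
  | tMin a b => mn (teval a) (teval b)
  | tMax a b => mx (teval a) (teval b)
  | tOdot a b => od (teval a) (teval b)
  | tOplus a b => op (teval a) (teval b)
  | tZero => z
  | tOne => o
  end.
End Eval.

(* The algebra PL_n: the element k : 'I_n.+1 represents k/n.           *)
Definition pl_min n (x y : 'I_n.+1) : 'I_n.+1 := inord (minn x y).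
Definition pl_max n (x y : 'I_n.+1) : 'I_n.+1 := inord (maxn x y).
(* x (.) y = max(0, x + y - 1)  ~  (k + l - n) truncated *)
Definition pl_odot n (x y : 'I_n.+1) : 'I_n.+1 := inord (x + y - n).
(* x (+) y = min(1, x + y)      ~  min(n, k + l) *)
Definition pl_oplus n (x y : 'I_n.+1) : 'I_n.+1 := inord (minn n (x + y)).
Definition pl_zero n : 'I_n.+1 := ord0.
Definition pl_one n : 'I_n.+1 := ord_max.

Definition pl_eval n (v : nat -> 'I_n.+1) (t : term) : 'I_n.+1 :=
  teval (@pl_min n) (@pl_max n) (@pl_odot n) (@pl_oplus n)
        (@pl_zero n) (@pl_one n) v t.

(* PMV_n = the variety generated by PL_n, i.e. (Birkhoff) the class of *)
(* algebras of the same signature satisfying every identity of PL_n.   *)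
Record pmv (n : nat) := PMV {
  pcar :> Type;
  pmin : pcar -> pcar -> pcar;
  pmax : pcar -> pcar -> pcar;
  podot : pcar -> pcar -> pcar;
  poplus : pcar -> pcar -> pcar;
  pzero : pcar;
  pone : pcar;
  pmv_ax : forall t1 t2 : term,
    (forall v : nat -> 'I_n.+1, pl_eval v t1 = pl_eval v t2) ->
    forall v : nat -> pcar,
      teval pmin pmax podot poplus pzero pone v t1 =
      teval pmin pmax podot poplus pzero pone v t2 }.

Arguments pmin {n A} : rename.
Arguments pmax {n A} : rename.
Arguments podot {n A} : rename.
Arguments poplus {n A} : rename.
Arguments pzero {n A} : rename.
Arguments pone {n A} : rename.

Record is_pmvhom n (A B : pmv n) (g : A -> B) : Prop := {
  pmvhom_min : forall a b, g (pmin a b) = pmin (g a) (g b);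
  pmvhom_max : forall a b, g (pmax a b) = pmax (g a) (g b);
  pmvhom_odot : forall a b, g (podot a b) = podot (g a) (g b);
  pmvhom_oplus : forall a b, g (poplus a b) = poplus (g a) (g b);
  pmvhom_zero : g pzero = pzero;
  pmvhom_one : g pone = pone }.

Record dl := DL {
  lcar :> Type;
  lmeet : lcar -> lcar -> lcar;
  ljoin : lcar -> lcar -> lcar;
  lbot : lcar;
  ltop : lcar;
  lmeetC : forall x y, lmeet x y = lmeet y x;
  ljoinC : forall x y, ljoin x y = ljoin y x;
  lmeetA : forall x y z, lmeet x (lmeet y z) = lmeet (lmeet x y) z;
  ljoinA : forall x y z, ljoin x (ljoin y z) = ljoin (ljoin x y) z;
  lmeetKJ : forall x y, lmeet x (ljoin x y) = x;
  ljoinKM : forall x y, ljoin x (lmeet x y) = x;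
  lmeetDr : forall x y z, lmeet x (ljoin y z) = ljoin (lmeet x y) (lmeet x z);
  ljoin0 : forall x, ljoin lbot x = x;
  lmeet1 : forall x, lmeet ltop x = x }.

Arguments lmeet {L} : rename.
Arguments ljoin {L} : rename.
Arguments lbot {L} : rename.
Arguments ltop {L} : rename.

Record is_dlhom (L L' : dl) (f : L -> L') : Prop := {
  dlhom_meet : forall x y, f (lmeet x y) = lmeet (f x) (f y);
  dlhom_join : forall x y, f (ljoin x y) = ljoin (f x) (f y);
  dlhom_bot : f lbot = lbot;
  dlhom_top : f ltop = ltop }.

Definition bool_dl : dl.
Proof.
refine (@DL bool andb orb false true _ _ _ _ _ _ _ _ _);
  by repeat case.
Defined.

(* Priestley dual D(L) = DL(L, 2), pointwise order, product topology   *)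
Definition dual (L : dl) := {x : L -> bool_dl | is_dlhom x}.

Definition dual_le (L : dl) (x y : dual L) : Prop :=
  forall l : L, (sval x l ==> sval y l).

(* Open sets of D(L) as a subspace of the product space 2^L:
   U is open iff each of its points has a basic neighbourhood
   (determined by finitely many coordinates) contained in U. *)
Definition dual_open (L : dl) (U : dual L -> Prop) : Prop :=
  forall x, U x -> exists F : seq L,
    forall y : dual L, (forall l, List.In l F -> sval y l = sval x l) -> U y.

(* Continuity into the discrete space {0, 1/n, ..., 1}. *)
Definition dual_continuous (L : dl) n (alpha : dual L -> 'I_n.+1) : Prop :=
  forall V : 'I_n.+1 -> Prop, dual_open (fun x => V (alpha x)).

Definition dual_monotone (L : dl) n (alpha : dual L -> 'I_n.+1) : Prop :=
  forall x y, dual_le x y -> (alpha x <= alpha y)%N.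

Definition in_ppower n (L : dl) (alpha : dual L -> 'I_n.+1) : Prop :=
  dual_continuous alpha /\ dual_monotone alpha.

Definition dual_map (L L' : dl) (f : L -> L') (hf : is_dlhom f)
  (x : dual L') : dual L.
Proof.
exists (fun l => sval x (f l)).
case: x => x [hm hj hb ht]; case: hf => fm fj fb ft.
split => /= [a b|a b||]; by rewrite ?fm ?fj ?fb ?ft ?hm ?hj ?hb ?ht.
Defined.

Record is_phom n (A : pmv n) (L : dl) (phi : A -> dual L -> 'I_n.+1) : Prop := {
  phom_in : forall a, in_ppower (phi a);
  phom_min : forall a b x, phi (pmin a b) x = pl_min (phi a x) (phi b x);
  phom_max : forall a b x, phi (pmax a b) x = pl_max (phi a x) (phi b x);
  phom_odot : forall a b x, phi (podot a b) x = pl_odot (phi a x) (phi b x);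
  phom_oplus : forall a b x, phi (poplus a b) x = pl_oplus (phi a x) (phi b x);
  phom_zero : forall x, phi pzero x = pl_zero n;
  phom_one : forall x, phi pone x = pl_one n }.

Definition skel n (A : pmv n) := {a : A | poplus a a = a}.

Section Skel.
Variables (n : nat) (A : pmv n).

Let env (a b : A) : nat -> A := fun i => if i is 0 then a else b.

Lemma skel_min_closed (a b : A) :
  poplus a a = a -> poplus b b = b -> poplus (pmin a b) (pmin a b) = pmin a b.
Proof.
move=> ha hb.
have := @pmv_ax n A
  (tOplus (tMin (tVar 0) (tVar 1)) (tMin (tVar 0) (tVar 1)))
  (tMin (tOplus (tVar 0) (tVar 0)) (tOplus (tVar 1) (tVar 1))).
move=> /(_ _ (env a b)) /= ->; first by rewrite ha hb.
move=> v /=; apply: val_inj => /=.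
rewrite /pl_oplus /pl_min.
have Hx := ltn_ord (v 0); have Hy := ltn_ord (v 1).
rewrite !inordK; lia.
Qed.

Lemma skel_max_closed (a b : A) :
  poplus a a = a -> poplus b b = b -> poplus (pmax a b) (pmax a b) = pmax a b.
Proof.
move=> ha hb.
have := @pmv_ax n A
  (tOplus (tMax (tVar 0) (tVar 1)) (tMax (tVar 0) (tVar 1)))
  (tMax (tOplus (tVar 0) (tVar 0)) (tOplus (tVar 1) (tVar 1))).
move=> /(_ _ (env a b)) /= ->; first by rewrite ha hb.
move=> v /=; apply: val_inj => /=.
rewrite /pl_oplus /pl_max.
have Hx := ltn_ord (v 0); have Hy := ltn_ord (v 1).
rewrite !inordK; lia.
Qed.

Lemma skel_zero_closed : poplus (@pzero n A) pzero = pzero.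
Proof.
have := @pmv_ax n A (tOplus tZero tZero) tZero.
move=> /(_ _ (env pzero pzero)) /= -> // v /=; apply: val_inj => /=.
rewrite /pl_oplus /pl_zero /= inordK //; lia.
Qed.

Lemma skel_one_closed : poplus (@pone n A) pone = pone.
Proof.
have := @pmv_ax n A (tOplus tOne tOne) tOne.
move=> /(_ _ (env pone pone)) /= -> // v /=; apply: val_inj => /=.
rewrite /pl_oplus /pl_one /= inordK //; lia.
Qed.

Definition skel_meet (s t : skel A) : skel A :=
  exist _ (pmin (sval s) (sval t)) (skel_min_closed (svalP s) (svalP t)).
Definition skel_join (s t : skel A) : skel A :=
  exist _ (pmax (sval s) (sval t)) (skel_max_closed (svalP s) (svalP t)).
Definition skel_bot : skel A := exist _ pzero skel_zero_closed.
Definition skel_top : skel A := exist _ pone skel_one_closed.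

End Skel.

Record is_skelhom n (A : pmv n) (L : dl) (h : skel A -> L) : Prop := {
  skelhom_meet : forall s t, h (skel_meet s t) = lmeet (h s) (h t);
  skelhom_join : forall s t, h (skel_join s t) = ljoin (h s) (h t);
  skelhom_bot : h (skel_bot A) = lbot;
  skelhom_top : h (skel_top A) = ltop }.

Definition skel_map n (A A' : pmv n) (g : A' -> A) (hg : is_pmvhom g)
  (s : skel A') : skel A.
Proof.
exists (g (sval s)).
by rewrite -(pmvhom_oplus hg) (svalP s).
Defined.

(* Main.v *)
Require Import Defs.
From mathcomp Require Import all_boot.
From mathcomp Require Import zify.
From mathcomp Require Import boolp classical_sets.
From Stdlib Require Import ClassicalEpsilon.
Set Implicit Arguments. Unset Strict Implicit. Unset Printing Implicit Defensive.

Fixpoint cutT (K b : nat) (t : term) : term :=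
  match K with 0 => t | K'.+1 =>
    let s := cutT K' b./2 t in if odd b then tOdot s s else tOplus s s end.

Definition bj n j := (2 ^ n.+1 * j.-1 + n.-1) %/ n.
Definition stepT n j t :=
  if j == 0 then tOne else if n < j then tZero else cutT n.+1 (bj n j) t.

Lemma pl_cutT n v K b t : b < 2 ^ K ->
  (@pl_eval n v (cutT K b t) : nat) = minn n (2 ^ K * pl_eval v t - b * n).
Proof.
elim: K b => [|K IH] b /=.
  rewrite expn0 ltnS leqn0 => /eqP ->; have := ltn_ord (pl_eval v t); lia.
move=> hb; have hb2 : b./2 < 2 ^ K.
  by rewrite -(ltn_pmul2r (isT : 0 < 2)) -expnSr; move: hb; rewrite -{1}(odd_double_half b) -muln2; lia.
have E := IH _ hb2.
have Hbn : b * n = odd b * n + 2 * (b./2 * n).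
  by rewrite -{1}(odd_double_half b) mulnDl -muln2 -mulnA mulnCA.
rewrite expnS -mulnA Hbn.
set X := 2 ^ K * pl_eval v t in E *.
set Y := b./2 * n in E *.
case: (odd b) => /=.
- rewrite /pl_eval /= -!/(pl_eval _ _) /pl_odot inordK E; lia.
- rewrite /pl_eval /= -!/(pl_eval _ _) /pl_oplus inordK E; lia.
Qed.

Lemma bj_facts n j : 0 < n -> 1 <= j <= n ->
  2 ^ n.+1 * j.-1 <= bj n j * n <= 2 ^ n.+1 * j.-1 + n.-1 /\ bj n j < 2 ^ n.+1.
Proof.
move=> n0 /andP[j1 jn].
have h1 := leq_divM (2 ^ n.+1 * j.-1 + n.-1) n.
have h2 := ltn_ceil (2 ^ n.+1 * j.-1 + n.-1) n0.
rewrite /bj; set b := _ %/ n in h1 h2 *.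
have hM : n < 2 ^ n := ltn_expl n (isT : 1 < 2).
have hj : 2 ^ n.+1 * j.-1 <= 2 ^ n.+1 * n.-1 by rewrite leq_mul2l; apply/orP; right; lia.
rewrite mulSn in h2.
split; first (apply/andP; split; lia).
have : b * n < 2 ^ n.+1 * n.
  have -> : 2 ^ n.+1 * n = 2 ^ n.+1 * n.-1 + 2 ^ n.+1 by case: (n) n0 => // n' _; rewrite /= mulnS addnC.
  have : n < 2 ^ n.+1 by rewrite expnS; lia.
  lia.
by rewrite ltn_pmul2r.
Qed.

Lemma pl_stepT n v j t : 0 < n ->
  @pl_eval n v (stepT n j t) = if j <= pl_eval v t then ord_max else ord0.
Proof.
move=> n0; apply: ord_inj; rewrite /stepT.
have hu := ltn_ord (pl_eval v t).
case: eqP => [->|/eqP j0]; first by [].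
case: ltnP => jn.
  by rewrite /= leqNgt (leq_trans hu jn).
have [/andP[b1 b2] bM] := bj_facts n0 (j:=j) (ltac:(lia)).
rewrite pl_cutT //.
set u := nat_of_ord (pl_eval v t) in hu *.
set M := 2 ^ n.+1 in b1 b2 bM *.
have hM : n < 2 ^ n := ltn_expl n (isT : 1 < 2).
have hM2 : 2 * n.+1 <= M by rewrite /M expnS leq_mul2l.
case: leqP => ju /=.
  have : M * j <= M * u by rewrite leq_mul2l ju orbT.
  case: j j0 jn b1 b2 bM ju => // j0 _ jn b1 b2 _ ju /=; rewrite mulnS; lia.
have : M * u <= M * j.-1 by rewrite leq_mul2l; apply/orP; right; lia.
lia.
Qed.


Section Subst.
Variables (T : Type) (mn mx od op : T -> T -> T) (z o : T).
Lemma teval_cutT0 v w K b t : w 0 = teval mn mx od op z o v t ->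
  teval mn mx od op z o v (cutT K b t) =
  teval mn mx od op z o w (cutT K b (tVar 0)).
Proof.
move=> hw; elim: K b => [|K IH] b /=; first by rewrite hw.
by case: (odd b); rewrite /= (IH b./2).
Qed.
Lemma teval_cutT v K b t :
  teval mn mx od op z o v (cutT K b t) =
  teval mn mx od op z o (fun _ => teval mn mx od op z o v t) (cutT K b (tVar 0)).
Proof. exact: teval_cutT0. Qed.
Lemma teval_stepT n v j t :
  teval mn mx od op z o v (stepT n j t) =
  teval mn mx od op z o (fun _ => teval mn mx od op z o v t) (stepT n j (tVar 0)).
Proof. by rewrite /stepT; case: eqP => // _; case: ltnP => // _; apply: teval_cutT. Qed.
End Subst.

Section PL.
Variable n : nat.
Definition sv (j : nat) (u : 'I_n.+1) : 'I_n.+1 := if j <= u then ord_max else ord0.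
Lemma pl_minE (x y : 'I_n.+1) : (pl_min x y : nat) = minn x y.
Proof. rewrite /pl_min inordK //; have := ltn_ord x; lia. Qed.
Lemma pl_maxE (x y : 'I_n.+1) : (pl_max x y : nat) = maxn x y.
Proof. rewrite /pl_max inordK //; have := ltn_ord x; have := ltn_ord y; lia. Qed.
Lemma pl_odotE (x y : 'I_n.+1) : (pl_odot x y : nat) = x + y - n.
Proof. rewrite /pl_odot inordK //; have := ltn_ord x; have := ltn_ord y; lia. Qed.
Lemma pl_oplusE (x y : 'I_n.+1) : (pl_oplus x y : nat) = minn n (x + y).
Proof. rewrite /pl_oplus inordK //; lia. Qed.
Lemma svE j u : (sv j u : nat) = if j <= u then n else 0.
Proof. by rewrite /sv; case: ifP. Qed.
Lemma pl_zeroE : (pl_zero n : nat) = 0. Proof. by []. Qed.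
Lemma pl_oneE : (pl_one n : nat) = n. Proof. by []. Qed.
Lemma pl_step v j t : 0 < n -> @pl_eval n v (stepT n j t) = sv j (pl_eval v t).
Proof. exact: pl_stepT. Qed.
Lemma pl_dbl v t : (@pl_eval n v (cutT n 0 t) : nat) = minn n (2 ^ n * pl_eval v t).
Proof. by rewrite pl_cutT ?expn_gt0 // mul0n subn0. Qed.
End PL.

Ltac plsolve :=
  apply: ord_inj;
  rewrite ?(pl_minE, pl_maxE, pl_odotE, pl_oplusE, svE, pl_zeroE, pl_oneE, pl_dbl);
  repeat match goal with |- context [if ?c then _ else _] => case: (boolP c) end;
  lia.


Section A.
Variables (n : nat) (n0 : 0 < n) (A : pmv n).
Notation tevA := (teval (@pmin n A) (@pmax n A) (@podot n A) (@poplus n A) (@pzero n A) (@pone n A)).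
Definition cutA j (a : A) : A := tevA (fun _ => a) (stepT n j (tVar 0)).
Lemma tev_step v j t : tevA v (stepT n j t) = cutA j (tevA v t).
Proof. exact: teval_stepT. Qed.
Definition env (a b : A) : nat -> A := fun i => if i is 0 then a else b.
Lemma ident t1 t2 v : (forall w, @pl_eval n w t1 = pl_eval w t2) -> tevA v t1 = tevA v t2.
Proof. by move=> h; apply: pmv_ax. Qed.

Ltac idtac_pl := let w := fresh "w" in intro w;
  rewrite /pl_eval /= -!/(pl_eval w _) ?pl_step //= ;
  have := ltn_ord (w 0); have := ltn_ord (w 1); move=> ? ?; plsolve.

Lemma cut_min j a b : cutA j (pmin a b) = pmin (cutA j a) (cutA j b).
Proof.
have := @ident (stepT n j (tMin (tVar 0) (tVar 1))) (tMin (stepT n j (tVar 0)) (stepT n j (tVar 1))) (env a b).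
rewrite /= !tev_step /=; apply; idtac_pl.
Qed.

Lemma cut_max j a b : cutA j (pmax a b) = pmax (cutA j a) (cutA j b).
Proof.
have := @ident (stepT n j (tMax (tVar 0) (tVar 1))) (tMax (stepT n j (tVar 0)) (stepT n j (tVar 1))) (env a b).
rewrite /= !tev_step /=; apply; idtac_pl.
Qed.
Lemma cut_idem j a : poplus (cutA j a) (cutA j a) = cutA j a.
Proof.
have := @ident (tOplus (stepT n j (tVar 0)) (stepT n j (tVar 0))) (stepT n j (tVar 0)) (env a a).
rewrite /= !tev_step /=; apply; idtac_pl.
Qed.
Lemma cut_dc i j a : i <= j -> pmin (cutA i a) (cutA j a) = cutA j a.
Proof.
move=> ij.
have := @ident (tMin (stepT n i (tVar 0)) (stepT n j (tVar 0))) (stepT n j (tVar 0)) (env a a).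
rewrite /= !tev_step /=; apply; idtac_pl.
Qed.
Lemma cut_I1 j p q a b : j + n <= p + q ->
  pmin (pmin (cutA p a) (cutA q b)) (cutA j (podot a b)) = pmin (cutA p a) (cutA q b).
Proof.
move=> h.
have := @ident (tMin (tMin (stepT n p (tVar 0)) (stepT n q (tVar 1))) (stepT n j (tOdot (tVar 0) (tVar 1))))
  (tMin (stepT n p (tVar 0)) (stepT n q (tVar 1))) (env a b).
rewrite /= !tev_step /=; apply; idtac_pl.
Qed.
Lemma cut_I2 j p q a b : 0 < j -> p + q <= n + j + 1 ->
  pmin (cutA j (podot a b)) (pmax (cutA p a) (cutA q b)) = cutA j (podot a b).
Proof.
move=> h1 h2.
have := @ident (tMin (stepT n j (tOdot (tVar 0) (tVar 1))) (tMax (stepT n p (tVar 0)) (stepT n q (tVar 1))))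
  (stepT n j (tOdot (tVar 0) (tVar 1))) (env a b).
rewrite /= !tev_step /=; apply; idtac_pl.
Qed.
Lemma cut_I3 j p q a b : j <= n -> j <= p + q ->
  pmin (pmin (cutA p a) (cutA q b)) (cutA j (poplus a b)) = pmin (cutA p a) (cutA q b).
Proof.
move=> h h'.
have := @ident (tMin (tMin (stepT n p (tVar 0)) (stepT n q (tVar 1))) (stepT n j (tOplus (tVar 0) (tVar 1))))
  (tMin (stepT n p (tVar 0)) (stepT n q (tVar 1))) (env a b).
rewrite /= !tev_step /=; apply; idtac_pl.
Qed.
Lemma cut_I4 j p q a b : 0 < j -> p + q <= j + 1 ->
  pmin (cutA j (poplus a b)) (pmax (cutA p a) (cutA q b)) = cutA j (poplus a b).
Proof.
move=> h1 h2.
have := @ident (tMin (stepT n j (tOplus (tVar 0) (tVar 1))) (tMax (stepT n p (tVar 0)) (stepT n q (tVar 1))))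
  (stepT n j (tOplus (tVar 0) (tVar 1))) (env a b).
rewrite /= !tev_step /=; apply; idtac_pl.
Qed.
Lemma cut_zero j : 0 < j -> cutA j pzero = pzero.
Proof.
move=> h.
have := @ident (stepT n j tZero) tZero (env pzero pzero).
rewrite /= !tev_step /=; apply; idtac_pl.
Qed.
Lemma cut_one j : j <= n -> cutA j pone = pone.
Proof.
move=> h.
have := @ident (stepT n j tOne) tOne (env pone pone).
rewrite /= !tev_step /=; apply; idtac_pl.
Qed.
Lemma cut_big j a : n < j -> cutA j a = pzero.
Proof.
move=> h; rewrite /cutA /stepT; case: eqP => [j0|_]; first by move: h; rewrite j0.
by rewrite h.
Qed.
Lemma cut_0 a : cutA 0 a = pone.
Proof. by []. Qed.

Definition Dbl (a : A) := tevA (fun _ => a) (cutT n 0 (tVar 0)).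
Lemma Dbl_idem a : poplus a a = a -> Dbl a = a.
Proof.
move=> h; rewrite /Dbl.
suff H : forall K, tevA (fun _ => a) (cutT K 0 (tVar 0)) = a by apply: H.
by elim=> [|K IH] //=; rewrite IH.
Qed.
Lemma cut_Dbl j a : 0 < j <= n -> cutA j (Dbl a) = Dbl a.
Proof.
move=> /andP[h1 h2].
have := @ident (stepT n j (cutT n 0 (tVar 0))) (cutT n 0 (tVar 0)) (fun _ => a).
rewrite /= !tev_step /=; apply=> w.
rewrite pl_step //; apply: ord_inj; rewrite svE pl_dbl /=.
have hM : n < 2 ^ n := ltn_expl n (isT : 1 < 2).
case: (posnP (w 0)) => [->|w0]; first by rewrite muln0 minn0; case: ifP => //; lia.
have : 2 ^ n <= 2 ^ n * w 0 by rewrite leq_pmulr.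
move=> hX; rewrite (minn_idPl _); last lia.
by rewrite h2.
Qed.
Lemma cut_skel j a : poplus a a = a -> 0 < j <= n -> cutA j a = a.
Proof. by move=> h hj; rewrite -{1 2}(Dbl_idem h) cut_Dbl. Qed.

Lemma tev_phom (L : dl) (phi : A -> dual L -> 'I_n.+1) : is_phom phi ->
  forall v t x, phi (tevA v t) x = pl_eval (fun i => phi (v i) x) t.
Proof.
case=> _ hmin hmax hod hop h0 h1 v t x.
by elim: t => [i|t1 IH1 t2 IH2|t1 IH1 t2 IH2|t1 IH1 t2 IH2|t1 IH1 t2 IH2||] /=;
  rewrite ?hmin ?hmax ?hod ?hop ?h0 ?h1 ?IH1 ?IH2.
Qed.
Lemma phom_cut (L : dl) (phi : A -> dual L -> 'I_n.+1) : is_phom phi ->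
  forall j a x, phi (cutA j a) x = sv j (phi a x).
Proof. by move=> h j a x; rewrite /cutA (tev_phom h) pl_step. Qed.
End A.

Lemma tev_hom n (A A' : pmv n) (g : A' -> A) : is_pmvhom g -> forall v t,
  g (teval pmin pmax podot poplus pzero pone v t) =
  teval pmin pmax podot poplus pzero pone (fun i => g (v i)) t.
Proof.
case=> hmin hmax hod hop h0 h1 v t.
by elim: t => [i|t1 IH1 t2 IH2|t1 IH1 t2 IH2|t1 IH1 t2 IH2|t1 IH1 t2 IH2||] /=;
  rewrite ?hmin ?hmax ?hod ?hop ?h0 ?h1 ?IH1 ?IH2.
Qed.
Lemma hom_cut n (A A' : pmv n) (g : A' -> A) : is_pmvhom g -> forall j a,
  g (cutA j a) = cutA j (g a).
Proof. by move=> h j a; rewrite /cutA (tev_hom h). Qed.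


Section MaxExt.
Variables (X : Type) (fin : seq X -> Prop).
Definition good (S : X -> Prop) := forall s : seq X, (forall a, List.In a s -> S a) -> fin s.
Lemma good_sub (S T : X -> Prop) : good S -> (forall x, T x -> S x) -> good T.
Proof. by move=> gS TS s hs; apply: gS => a /hs /TS. Qed.

Lemma max_ext (S0 : X -> Prop) : good S0 -> exists M : X -> Prop,
  [/\ (forall a, S0 a -> M a), good M & forall a, good (fun x => M x \/ x = a) -> M a].
Proof.
move=> g0.
have [|A [PA Amax]] := @Zorn_bigcup X (fun A => good (fun x => A x \/ S0 x)).
  move=> F FP Ftot s Hs.
  have : (exists2 X0, F X0 & forall a, List.In a s -> X0 a \/ S0 a) \/
         (forall a, List.In a s -> S0 a).
    elim: s Hs => [|x s IH] Hs; first by right.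
    have [] := IH (fun a ha => Hs a (or_intror ha)).
    - case=> X0 FX0 h0; case: (Hs x (or_introl erefl)) => [[X1 FX1 X1x]|S0x].
      + case: (Ftot _ _ FX0 FX1) => sub.
        * left; exists X1 => // a [<-|ha]; first by left.
          by case: (h0 a ha) => [/sub|]; auto.
        * left; exists X0 => // a [<-|ha]; first by left; apply: sub.
          exact: h0.
      + left; exists X0 => // a [<-|ha]; [by right|exact: h0].
    - move=> h0; case: (Hs x (or_introl erefl)) => [[X1 FX1 X1x]|S0x].
      + left; exists X1 => // a [<-|ha]; [by left|by right; apply: h0].
      + by right=> a [<-|ha] //; apply: h0.
  case=> [[X0 FX0 h0]|h0]; first exact: (FP _ FX0 s h0).
  exact: g0.
exists (fun x => A x \/ S0 x); split=> //; first by move=> a; right.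
move=> a ga; apply: contrapT => nMa.
apply: (Amax (fun x => A x \/ x = a)).
  split; first by move=> x; left.
  by move=> /(_ a (or_intror erefl)) Aa; apply: nMa; left.
refine (good_sub ga _) => x [[Ax|->]|S0x]; [by left; left|by right|by left; right].
Qed.
End MaxExt.


Section Lat.
Variable L : dl.
Definition le (x y : L) := lmeet x y = x.
Lemma meetxx (x : L) : lmeet x x = x.
Proof. by rewrite -{2}(ljoinKM x x) lmeetKJ. Qed.
Lemma joinxx (x : L) : ljoin x x = x.
Proof. by rewrite -{2}(lmeetKJ x x) ljoinKM. Qed.
Lemma le_joinE (x y : L) : le x y <-> ljoin x y = y.
Proof.
split=> h; first by rewrite -h ljoinC lmeetC ljoinKM.
by rewrite /le -h lmeetKJ.
Qed.
Lemma le_refl (x : L) : le x x. Proof. exact: meetxx. Qed.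
Lemma le_trans (x y z : L) : le x y -> le y z -> le x z.
Proof. by rewrite /le => hxy hyz; rewrite -hxy -lmeetA hyz. Qed.
Lemma le_anti (x y : L) : le x y -> le y x -> x = y.
Proof. by rewrite /le => hxy hyx; rewrite -hxy lmeetC hyx. Qed.
Lemma meet_l (x y : L) : le (lmeet x y) x.
Proof. by rewrite /le lmeetC lmeetA meetxx. Qed.
Lemma meet_r (x y : L) : le (lmeet x y) y.
Proof. by rewrite /le -lmeetA meetxx. Qed.
Lemma meet_glb (z x y : L) : le z x -> le z y -> le z (lmeet x y).
Proof. by rewrite /le => hx hy; rewrite lmeetA hx hy. Qed.
Lemma join_l (x y : L) : le x (ljoin x y). Proof. exact: lmeetKJ. Qed.
Lemma join_r (x y : L) : le y (ljoin x y). Proof. by rewrite ljoinC; apply: lmeetKJ. Qed.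
Lemma join_lub (x y z : L) : le x z -> le y z -> le (ljoin x y) z.
Proof. by move=> /le_joinE hx /le_joinE hy; apply/le_joinE; rewrite -ljoinA hy hx. Qed.
Lemma le_top (x : L) : le x ltop. Proof. by rewrite /le lmeetC lmeet1. Qed.
Lemma bot_le (x : L) : le lbot x. Proof. by apply/le_joinE; rewrite ljoin0. Qed.
Lemma meet_mono (a b c d : L) : le a b -> le c d -> le (lmeet a c) (lmeet b d).
Proof.
move=> h1 h2; apply: meet_glb; [exact: le_trans (meet_l _ _) h1|exact: le_trans (meet_r _ _) h2].
Qed.
Lemma join_mono (a b c d : L) : le a b -> le c d -> le (ljoin a c) (ljoin b d).
Proof.
move=> h1 h2; apply: join_lub; [exact: le_trans h1 (join_l _ _)|exact: le_trans h2 (join_r _ _)].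
Qed.

Lemma xmeet (x : dual L) a b : sval x (lmeet a b) = sval x a && sval x b.
Proof. exact: (dlhom_meet (svalP x)). Qed.
Lemma xjoin (x : dual L) a b : sval x (ljoin a b) = sval x a || sval x b.
Proof. exact: (dlhom_join (svalP x)). Qed.
Lemma xbot (x : dual L) : sval x lbot = false.
Proof. exact: (dlhom_bot (svalP x)). Qed.
Lemma xtop (x : dual L) : sval x ltop = true.
Proof. exact: (dlhom_top (svalP x)). Qed.
Lemma x_le (x : dual L) a b : le a b -> sval x a -> sval x b.
Proof. by move=> h; rewrite -h xmeet => /andP[]. Qed.

Definition mf (ls : seq L) := foldr lmeet ltop ls.
Definition jf (ls : seq L) := foldr ljoin lbot ls.
Lemma x_mf (x : dual L) ls : sval x (mf ls) <-> (forall l, List.In l ls -> sval x l).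
Proof.
elim: ls => [|a ls IH] /=; first by rewrite xtop.
rewrite xmeet; split.
  by move=> /andP[ha /IH hl] l [<-|/hl].
by move=> h; rewrite h /=; [apply/IH => l hl; apply: h; right|left].
Qed.
Lemma x_jf (x : dual L) ls : ~~ sval x (jf ls) <-> (forall l, List.In l ls -> ~~ sval x l).
Proof.
elim: ls => [|a ls IH] /=; first by rewrite xbot.
rewrite xjoin negb_or; split.
  by move=> /andP[ha /IH hl] l [<-|/hl].
by move=> h; rewrite h /=; [apply/IH => l hl; apply: h; right|left].
Qed.

Definition pos (s : seq (L * bool)) :=
  foldr (fun p acc => if p.2 then lmeet p.1 acc else acc) ltop s.
Definition neg (s : seq (L * bool)) :=
  foldr (fun p acc => if p.2 then acc else ljoin p.1 acc) lbot s.
Lemma pos_cat s t : pos (s ++ t) = lmeet (pos s) (pos t).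
Proof. by elim: s => [|[a []] s IH] /=; rewrite ?lmeet1 ?IH ?lmeetA. Qed.
Lemma neg_cat s t : neg (s ++ t) = ljoin (neg s) (neg t).
Proof. by elim: s => [|[a []] s IH] /=; rewrite ?ljoin0 ?IH ?ljoinA. Qed.
Lemma pos_all z s : (forall p, List.In p s -> p.2 = true -> le z p.1) -> le z (pos s).
Proof.
elim: s => [|[a b] s IH] h /=; first exact: le_top.
have hs := IH (fun p hp => h p (or_intror hp)).
case: b h => h //; apply: meet_glb => //; exact: (h _ (or_introl erefl)).
Qed.
Lemma neg_all z s : (forall p, List.In p s -> ~~ p.2 -> le p.1 z) -> le (neg s) z.
Proof.
elim: s => [|[a b] s IH] h /=; first exact: bot_le.
have hs := IH (fun p hp => h p (or_intror hp)).
case: b h => h //; apply: join_lub => //; exact: (h _ (or_introl erefl)).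
Qed.
Lemma pos_in a t : List.In (a, true) t -> le (pos t) a.
Proof.
elim: t => [|[c b] t IH] //= [[-> ->]|h]; first exact: meet_l.
by case: b; [apply: le_trans (meet_r _ _) (IH h)|apply: IH].
Qed.
Lemma neg_in a t : List.In (a, false) t -> le a (neg t).
Proof.
elim: t => [|[c b] t IH] //= [[-> ->]|h]; first exact: join_l.
by case: b; [apply: IH|apply: le_trans (IH h) (join_r _ _)].
Qed.

Lemma sep (l l' : L) : ~ le l l' -> exists z : dual L, sval z l /\ ~~ sval z l'.
Proof.
move=> nll.
pose fin (s : seq (L * bool)) := ~ le (pos s) (neg s).
have g0 : good fin (fun p => p = (l, true) \/ p = (l', false)).
  move=> s hs hle; apply: nll.
  have h1 : le l (pos s).
    by apply: pos_all => p /hs [->|->] //= _; apply: le_refl.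
  have h2 : le (neg s) l'.
    by apply: neg_all => p /hs [->|->] //= _; apply: le_refl.
  exact: le_trans h1 (le_trans hle h2).
have [M [S0M gM Mmax]] := max_ext g0.
have Mbad s : (forall p, List.In p s -> M p) -> ~ le (pos s) (neg s) := gM s.
have Mcons a : M (a, true) -> M (a, false) -> False.
  move=> h1 h2; apply: (Mbad [:: (a, true); (a, false)]).
    by move=> p /= [<-|[<-|[]]].
  by rewrite /=; apply: le_trans (meet_l _ _) (join_l _ _).
have Mtot a : M (a, true) \/ M (a, false).
  apply: contrapT => /not_orP[n1 n2].
  have : ~ good fin (fun x => M x \/ x = (a, true)) by move/Mmax.
  move=> /existsNP[s1 /not_implyP[hs1 /contrapT b1]].
  have : ~ good fin (fun x => M x \/ x = (a, false)) by move/Mmax.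
  move=> /existsNP[s2 /not_implyP[hs2 /contrapT b2]].
  pose t1 := List.filter (fun p => `[< M p >]) s1.
  pose t2 := List.filter (fun p => `[< M p >]) s2.
  have ht1 p : List.In p t1 -> M p by move/List.filter_In => [_ /asboolP].
  have ht2 p : List.In p t2 -> M p by move/List.filter_In => [_ /asboolP].
  have hs1' p : List.In p s1 -> List.In p t1 \/ p = (a, true).
    move=> hp; case: (hs1 p hp) => [Mp|->]; last by right.
    by left; apply/List.filter_In; split=> //; apply/asboolP.
  have hs2' p : List.In p s2 -> List.In p t2 \/ p = (a, false).
    move=> hp; case: (hs2 p hp) => [Mp|->]; last by right.
    by left; apply/List.filter_In; split=> //; apply/asboolP.
  have e1 : le (lmeet (pos t1) a) (pos s1).
    apply: pos_all => p /hs1' [hp|->] // hp2; last exact: meet_r.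
    case: p hp hp2 => c [] // hp _; exact: le_trans (meet_l _ _) (pos_in hp).
  have e2 : le (neg s1) (neg t1).
    apply: neg_all => p /hs1' [hp|->] // hp2.
    case: p hp hp2 => c [] // hp _; exact: neg_in.
  have e3 : le (pos t2) (pos s2).
    apply: pos_all => p /hs2' [hp|->] // hp2.
    case: p hp hp2 => c [] // hp _; exact: pos_in.
  have e4 : le (neg s2) (ljoin (neg t2) a).
    apply: neg_all => p /hs2' [hp|->] // hp2; last exact: join_r.
    case: p hp hp2 => c [] // hp _; exact: le_trans (neg_in hp) (join_l _ _).
  apply: (Mbad (t1 ++ t2)).
    by move=> p hp; case: (List.in_app_or _ _ _ hp) => [/ht1|/ht2].
  rewrite pos_cat neg_cat.
  have f1 : le (pos t2) (ljoin (neg t2) a) := le_trans e3 (le_trans b2 e4).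
  have f2 : le (lmeet (pos t1) a) (neg t1) := le_trans e1 (le_trans b1 e2).
  apply: le_trans (meet_mono (le_refl (pos t1)) f1) _.
  rewrite lmeetDr ljoinC; apply: join_mono => //; exact: meet_r.
pose g a := `[< M (a, true) >].
have Mg a : M (a, g a).
  by rewrite /g; case: (Mtot a) => h; [rewrite asboolT|rewrite asboolF //; move/Mcons; apply].
have Mgt a : g a -> M (a, true) by move=> h; move: (Mg a); rewrite h.
have Mgf a : ~~ g a -> M (a, false) by move/negbTE=> h; move: (Mg a); rewrite h.
have hg : is_dlhom (g : L -> bool_dl).
  split=> /=.
  - move=> a b; case Ea: (g a); case Eb: (g b); case Eab: (g (lmeet a b)) => //=; exfalso.
    + apply: (Mbad [:: (a, true); (b, true); (lmeet a b, false)]).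
        by move=> p /= [<-|[<-|[<-|[]]]]; [apply: Mgt|apply: Mgt|apply: Mgf; rewrite Eab].
      by rewrite /= (lmeetC b ltop) lmeet1 ljoinC ljoin0; apply: le_refl.
    + apply: (Mbad [:: (lmeet a b, true); (b, false)]).
        by move=> p /= [<-|[<-|[]]]; [apply: Mgt|apply: Mgf; rewrite Eb].
      by rewrite /= ljoinC ljoin0; apply: le_trans (meet_l _ _) (meet_r _ _).
    + apply: (Mbad [:: (lmeet a b, true); (a, false)]).
        by move=> p /= [<-|[<-|[]]]; [apply: Mgt|apply: Mgf; rewrite Ea].
      by rewrite /= ljoinC ljoin0; apply: le_trans (meet_l _ _) (meet_l _ _).
    + apply: (Mbad [:: (lmeet a b, true); (a, false)]).
        by move=> p /= [<-|[<-|[]]]; [apply: Mgt|apply: Mgf; rewrite Ea].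
      by rewrite /= ljoinC ljoin0; apply: le_trans (meet_l _ _) (meet_l _ _).
  - move=> a b; case Ea: (g a); case Eb: (g b); case Eab: (g (ljoin a b)) => //=; exfalso.
    + apply: (Mbad [:: (a, true); (ljoin a b, false)]).
        by move=> p /= [<-|[<-|[]]]; [apply: Mgt|apply: Mgf; rewrite Eab].
      by rewrite /= (lmeetC a ltop) lmeet1 (ljoinC _ lbot) ljoin0; apply: join_l.
    + apply: (Mbad [:: (a, true); (ljoin a b, false)]).
        by move=> p /= [<-|[<-|[]]]; [apply: Mgt|apply: Mgf; rewrite Eab].
      by rewrite /= (lmeetC a ltop) lmeet1 (ljoinC _ lbot) ljoin0; apply: join_l.
    + apply: (Mbad [:: (b, true); (ljoin a b, false)]).
        by move=> p /= [<-|[<-|[]]]; [apply: Mgt|apply: Mgf; rewrite Eab].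
      by rewrite /= (lmeetC b ltop) lmeet1 (ljoinC _ lbot) ljoin0; apply: join_r.
    + apply: (Mbad [:: (ljoin a b, true); (a, false); (b, false)]).
        by move=> p /= [<-|[<-|[<-|[]]]]; [apply: Mgt|apply: Mgf; rewrite Ea|apply: Mgf; rewrite Eb].
      by rewrite /= (lmeetC _ ltop) lmeet1 (ljoinC b lbot) ljoin0; apply: le_refl.
  - case E: (g lbot) => //; exfalso.
    apply: (Mbad [:: (lbot, true)]); first by move=> p /= [<-|[]]; apply: Mgt.
    exact: le_trans (meet_l _ _) (bot_le _).
  - case E: (g ltop) => //; exfalso.
    apply: (Mbad [:: (ltop, false)]); first by move=> p /= [<-|[]]; apply: Mgf; rewrite E.
    exact: le_trans (le_top _) (join_l _ _).
exists (exist _ (g : L -> bool_dl) hg) => /=; split.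
  case E: (g l) => //; exfalso; apply: (Mcons l); [by apply: S0M; left|by apply: Mgf; rewrite E].
case E: (g l') => //; exfalso; apply: (Mcons l'); [by apply: Mgt; rewrite E|by apply: S0M; right].
Qed.

Lemma rep_uniq (l l' : L) : (forall x : dual L, sval x l = sval x l') -> l = l'.
Proof.
move=> h; apply: le_anti; apply: contrapT => /sep [z [h1 h2]].
- by move: h2; rewrite -h h1.
- by move: h2; rewrite h h1.
Qed.
End Lat.


Section Comp.
Variable L : dl.

Lemma compact (K : dual L -> Prop) (S0 : L * bool -> Prop) :
  (forall x, ~ K x -> exists F : seq L, forall y : dual L,
     (forall l, List.In l F -> sval y l = sval x l) -> ~ K y) ->
  (forall s, (forall p, List.In p s -> S0 p) ->
     exists y : dual L, K y /\ forall p, List.In p s -> sval y p.1 = p.2) ->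
  exists y : dual L, K y /\ forall p, S0 p -> sval y p.1 = p.2.
Proof.
move=> Kcl fs.
pose fin (s : seq (L * bool)) :=
  exists y : dual L, K y /\ forall p, List.In p s -> sval y p.1 = p.2.
have [M [S0M gM Mmax]] := @max_ext _ fin S0 fs.
have Mcons a : M (a, true) -> M (a, false) -> False.
  move=> h1 h2; have [y [_ hy]] := gM [:: (a, true); (a, false)] (fun p hp =>
    match hp with or_introl e => eq_ind _ M h1 _ e
    | or_intror (or_introl e) => eq_ind _ M h2 _ e
    | or_intror (or_intror f) => False_ind _ f end).
  by move: (hy _ (or_introl erefl)) (hy _ (or_intror (or_introl erefl))) => /= ->.
have Mtot a : M (a, true) \/ M (a, false).
  apply: contrapT => /not_orP[n1 n2].
  have : ~ good fin (fun x => M x \/ x = (a, true)) by move/Mmax.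
  move=> /existsNP[s1 /not_implyP[hs1 b1]].
  have : ~ good fin (fun x => M x \/ x = (a, false)) by move/Mmax.
  move=> /existsNP[s2 /not_implyP[hs2 b2]].
  pose t1 := List.filter (fun p => `[< M p >]) s1.
  pose t2 := List.filter (fun p => `[< M p >]) s2.
  have ht p : List.In p (t1 ++ t2) -> M p.
    by move=> hp; case: (List.in_app_or _ _ _ hp) => /List.filter_In [_ /asboolP].
  have [y [Ky hy]] := gM _ ht.
  have hs1' p : List.In p s1 -> List.In p (t1 ++ t2) \/ p = (a, true).
    move=> hp; case: (hs1 p hp) => [Mp|->]; last by right.
    by left; apply: List.in_or_app; left; apply/List.filter_In; split=> //; apply/asboolP.
  have hs2' p : List.In p s2 -> List.In p (t1 ++ t2) \/ p = (a, false).
    move=> hp; case: (hs2 p hp) => [Mp|->]; last by right.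
    by left; apply: List.in_or_app; right; apply/List.filter_In; split=> //; apply/asboolP.
  case Ey: (sval y a).
    by apply: b1; exists y; split=> // p /hs1' [/hy|->].
  by apply: b2; exists y; split=> // p /hs2' [/hy|->].
pose g a := `[< M (a, true) >].
have Mg a : M (a, g a).
  by rewrite /g; case: (Mtot a) => h; [rewrite asboolT|rewrite asboolF //; move/Mcons; apply].
have gM2 s : (forall p, List.In p s -> p.2 = g p.1) ->
   exists y : dual L, K y /\ forall p, List.In p s -> sval y p.1 = g p.1.
  move=> hs; have hM : forall p, List.In p s -> M p.
    by move=> [a b] hp; move: (hs _ hp) => /= ->; apply: Mg.
  have [y [Ky hy]] := gM s hM.
  by exists y; split=> // p hp; rewrite hy // hs.
have hg : is_dlhom (g : L -> bool_dl).
  split=> /=.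
  - move=> a b.
    have [|y [_ hy]] := gM2 [:: (a, g a); (b, g b); (lmeet a b, g (lmeet a b))].
      by move=> p /= [<-|[<-|[<-|[]]]].
    have h1 := hy (a, g a) (or_introl erefl).
    have h2 := hy (b, g b) (or_intror (or_introl erefl)).
    have h3 := hy (lmeet a b, g (lmeet a b)) (or_intror (or_intror (or_introl erefl))).
    by rewrite /= in h1 h2 h3; rewrite -h1 -h2 -h3 xmeet.
  - move=> a b.
    have [|y [_ hy]] := gM2 [:: (a, g a); (b, g b); (ljoin a b, g (ljoin a b))].
      by move=> p /= [<-|[<-|[<-|[]]]].
    have h1 := hy (a, g a) (or_introl erefl).
    have h2 := hy (b, g b) (or_intror (or_introl erefl)).
    have h3 := hy (ljoin a b, g (ljoin a b)) (or_intror (or_intror (or_introl erefl))).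
    by rewrite /= in h1 h2 h3; rewrite -h1 -h2 -h3 xjoin.
  - have [|y [_ hy]] := gM2 [:: (lbot, g lbot)]; first by move=> p /= [<-|[]].
    have h1 := hy (lbot, g lbot) (or_introl erefl).
    by rewrite /= in h1; rewrite -h1 xbot.
  - have [|y [_ hy]] := gM2 [:: (ltop, g ltop)]; first by move=> p /= [<-|[]].
    have h1 := hy (ltop, g ltop) (or_introl erefl).
    by rewrite /= in h1; rewrite -h1 xtop.
pose z : dual L := exist _ (g : L -> bool_dl) hg.
exists z; split.
  apply: contrapT => /Kcl [F hF].
  have [|y [Ky hy]] := gM2 [seq (l, g l) | l <- F].
    by move=> p /List.in_map_iff [l [<- _]].
  apply: (hF y) Ky => l hl; apply: (hy (l, g l)).
  by apply/List.in_map_iff; exists l.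
move=> [a b] /S0M /= Mab; rewrite /=.
case: b Mab => Mab; case E: (g a) => //; exfalso; apply: (Mcons a) => //.
  by move: (Mg a); rewrite E.
by move: (Mg a); rewrite E.
Qed.

Lemma rep (U : dual L -> bool) :
  (forall x y, dual_le x y -> U x -> U y) ->
  dual_open (fun x => U x) -> dual_open (fun x => ~~ U x) ->
  exists l, forall x : dual L, sval x l = U x.
Proof.
move=> Uup Uo Vo.
have stepA x : U x -> exists l, sval x l /\ forall y : dual L, sval y l -> U y.
  move=> Ux; apply: contrapT => hn.
  have H l : sval x l -> exists y : dual L, sval y l /\ ~~ U y.
    move=> xl; apply: contrapT => hn2; apply: hn; exists l; split=> // y yl.
    by apply: contrapT => nUy; apply: hn2; exists y; split=> //; apply/negP.
  have hcl : forall y : dual L, ~ ~~ U y -> exists F : seq L, forall z : dual L,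
      (forall l, List.In l F -> sval z l = sval y l) -> ~ ~~ U z.
    move=> y /negP/negbNE Uy; have [F hF] := Uo y Uy.
    by exists F => z hz; apply/negP/negPn; apply: hF.
  have hfin : forall s, (forall p, List.In p s -> p.2 = true /\ sval x p.1) ->
      exists y : dual L, ~~ U y /\ forall p, List.In p s -> sval y p.1 = p.2.
    move=> s hs; have [|y [yl nUy]] := H (mf [seq p.1 | p <- s]).
      by apply/x_mf => l /List.in_map_iff [p [<- hp]]; have [_ ->] := hs p hp.
    exists y; split=> // p hp; have [-> _] := hs p hp.
    by move/x_mf: yl; apply; apply/List.in_map_iff; exists p.
  have [y [Ky hy]] := compact hcl hfin.
  have : dual_le x y by move=> l; apply/implyP => xl; exact: (hy (l, true)).
  by move/Uup/(_ Ux); rewrite (negbTE Ky).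
apply: contrapT => hn.
have H l : (forall y : dual L, sval y l -> U y) -> exists x : dual L, U x /\ ~~ sval x l.
  move=> Fl; apply: contrapT => hn2; apply: hn; exists l => x.
  case Ex: (sval x l); first by rewrite (Fl x Ex).
  by apply/esym/negbTE/negP => Ux; apply: hn2; exists x; rewrite Ex.
have hcl : forall y : dual L, ~ U y -> exists F : seq L, forall z : dual L,
    (forall l, List.In l F -> sval z l = sval y l) -> ~ U z.
  move=> y /negP nUy; have [F hF] := Vo y nUy.
  by exists F => z hz; apply/negP; apply: hF.
have hfin : forall s, (forall p, List.In p s ->
      p.2 = false /\ forall y : dual L, sval y p.1 -> U y) ->
    exists x : dual L, U x /\ forall p, List.In p s -> sval x p.1 = p.2.
  move=> s hs; have [|x [Ux nxl]] := H (jf [seq p.1 | p <- s]).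
    move=> y yl; apply: contrapT => nUy.
    have : ~~ sval y (jf [seq p.1 | p <- s]).
      apply/x_jf => l /List.in_map_iff [p [<- hp]]; apply/negP => ypl.
      by apply: nUy; have [_ ->] := hs p hp.
    by rewrite yl.
  exists x; split=> // p hp; have [-> _] := hs p hp.
  move/x_jf: nxl => /(_ p.1) h; apply/negbTE; apply: h.
  by apply/List.in_map_iff; exists p.
have [x [Ux hx]] := compact hcl hfin.
have [l [xl Fl]] := stepA x Ux.
by move: (hx (l, false) (conj erefl Fl)); rewrite /= xl.
Qed.
End Comp.


Lemma skel_eq n (A : pmv n) (s t : skel A) : sval s = sval t -> s = t.
Proof.
case: s t => a pa [b pb] /= e; subst b; congr exist; exact: Prop_irrelevance.
Qed.

Lemma mem_In (T : eqType) (x : T) s : x \in s -> List.In x s.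
Proof. by elim: s => [|y s IH] //=; rewrite inE => /orP[/eqP ->|/IH]; auto. Qed.

Lemma count_char (p : nat -> bool) m :
  (forall i j, i <= j -> p j -> p i) -> p 0 -> (forall j, m < j -> p j = false) ->
  forall j, (j <= count p (iota 1 m)) = p j.
Proof.
move=> dc p0 pbig.
have key : forall k, (forall j, 0 < j <= k -> (j <= count p (iota 1 k)) = p j)
                     /\ count p (iota 1 k) <= k.
  elim=> [|k [IH1 IH2]]; first by split=> // j; lia.
  rewrite (_ : iota 1 k.+1 = iota 1 k ++ [:: k.+1]); last by rewrite -[k.+1]addn1 iotaD /= add1n addn1.
  rewrite count_cat /= addn0.
  case pk: (p k.+1) => /=.
    have ck : count p (iota 1 k) = k.
      case: k IH1 IH2 pk => [|k] IH1 IH2 pk; first by apply/eqP; rewrite -leqn0.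
      apply/eqP; rewrite eqn_leq IH2 IH1 //=; apply: dc pk; lia.
    rewrite ck; split; last lia.
    move=> j /andP[j0 jk]; rewrite addn1 jk; symmetry; apply: dc pk; lia.
  rewrite addn0; split; last lia.
  move=> j /andP[j0 jk]; case: (ltngtP j k.+1) => [jk'|jk'|->].
  - by apply: IH1; lia.
  - lia.
  - by rewrite pk; apply/negbTE; rewrite -ltnNge; lia.
move=> j; case: (posnP j) => [->|j0]; first by rewrite p0.
case: (leqP j m) => jm; first by apply: (key m).1; lia.
rewrite pbig //; apply/negbTE; rewrite -ltnNge; have := (key m).2; lia.
Qed.

Section Main.
Variables (n : nat) (n0 : 0 < n).

Definition cutS (A : pmv n) j (a : A) : skel A := exist _ (cutA j a) (cut_idem n0 j a).

Definition Pj (A : pmv n) (L : dl) (h : skel A -> L) (a : A) (x : dual L) (j : nat) : bool :=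
  sval x (h (cutS j a)).
Definition Phi (A : pmv n) (L : dl) (h : skel A -> L) (a : A) (x : dual L) : 'I_n.+1 :=
  inord (count (Pj h a x) (iota 1 n)).
Definition Psi (A : pmv n) (L : dl) (phi : A -> dual L -> 'I_n.+1) (s : skel A) : L :=
  epsilon (inhabits lbot) (fun l => forall x : dual L, sval x l = (phi (sval s) x == ord_max)).

Lemma ord_ext (w w' : 'I_n.+1) : (forall j, (j <= w) = (j <= w')) -> w = w'.
Proof.
move=> h; apply: ord_inj; apply/eqP; rewrite eqn_leq -h leqnn h leqnn //.
Qed.

Section H.
Variables (A : pmv n) (L : dl) (h : skel A -> L) (hh : is_skelhom h) (x : dual L).
Local Notation H s := (sval x (h s)).
Lemma Hmeet s t : H (skel_meet s t) = H s && H t.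
Proof. by rewrite (skelhom_meet hh) xmeet. Qed.
Lemma Hjoin s t : H (skel_join s t) = H s || H t.
Proof. by rewrite (skelhom_join hh) xjoin. Qed.
Lemma Hbot : H (skel_bot A) = false.
Proof. by rewrite (skelhom_bot hh) xbot. Qed.
Lemma Htop : H (skel_top A) = true.
Proof. by rewrite (skelhom_top hh) xtop. Qed.

Lemma P0 a : Pj h a x 0.
Proof. by rewrite /Pj (_ : cutS 0 a = skel_top A) ?Htop //; apply: skel_eq. Qed.
Lemma Pbig a j : n < j -> Pj h a x j = false.
Proof. by move=> nj; rewrite /Pj (_ : cutS j a = skel_bot A) ?Hbot //; apply: skel_eq; rewrite /= cut_big. Qed.
Lemma Pdc a i j : i <= j -> Pj h a x j -> Pj h a x i.
Proof.
move=> ij; rewrite /Pj -(_ : skel_meet (cutS i a) (cutS j a) = cutS j a).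
  by rewrite Hmeet => /andP[].
by apply: skel_eq; rewrite /= cut_dc.
Qed.
Lemma Phi_char a j : (j <= Phi h a x) = Pj h a x j.
Proof.
rewrite /Phi inordK; last by rewrite ltnS (leq_trans (count_size _ _)) // size_iota.
apply: count_char; [exact: Pdc|exact: P0|exact: Pbig].
Qed.
End H.

Lemma Phi_hom (A : pmv n) (L : dl) (h : skel A -> L) : is_skelhom h -> is_phom (Phi h).
Proof.
move=> hh.
have PC := Phi_char hh.
split.
- move=> a; split.
    move=> V x Vx; exists [seq h (cutS j a) | j <- iota 1 n] => y hy.
    suff -> : Phi h a y = Phi h a x by [].
    rewrite /Phi; congr inord; apply: eq_in_count => j hj.
    rewrite /Pj hy //; apply/List.in_map_iff; exists j; split=> //; exact: mem_In.
  move=> x y hxy.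
  rewrite PC /Pj.
  move: (hxy (h (cutS (Phi h a x) a))) => /implyP; apply.
  by move: (PC x a (Phi h a x)); rewrite leqnn /Pj => <-.
- move=> a b x; apply: ord_ext => j; rewrite PC pl_minE leq_min !PC.
  rewrite /Pj (_ : cutS j (pmin a b) = skel_meet (cutS j a) (cutS j b)) ?Hmeet //.
  by apply: skel_eq; rewrite /= cut_min.
- move=> a b x; apply: ord_ext => j; rewrite PC pl_maxE leq_max !PC.
  rewrite /Pj (_ : cutS j (pmax a b) = skel_join (cutS j a) (cutS j b)) ?Hjoin //.
  by apply: skel_eq; rewrite /= cut_max.
- move=> a b x; apply: ord_ext => j; rewrite PC pl_odotE.
  case: (posnP j) => [->|j0]; first by rewrite P0.
  set wa := nat_of_ord (Phi h a x); set wb := nat_of_ord (Phi h b x).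
  case: leqP => hj.
  + have ha : Pj h a x wa by rewrite -PC.
    have hb : Pj h b x wb by rewrite -PC.
    have := Hmeet hh x (skel_meet (cutS wa a) (cutS wb b)) (cutS j (podot a b)).
    rewrite (_ : skel_meet (skel_meet _ _) _ = skel_meet (cutS wa a) (cutS wb b)); last first.
      by apply: skel_eq; rewrite /= cut_I1 //; lia.
    by rewrite !Hmeet //; move: ha hb; rewrite /Pj => -> -> /= <-.
  + have ha : Pj h a x wa.+1 = false by rewrite -PC ltnn.
    have hb : Pj h b x wb.+1 = false by rewrite -PC ltnn.
    have := Hmeet hh x (cutS j (podot a b)) (skel_join (cutS wa.+1 a) (cutS wb.+1 b)).
    rewrite (_ : skel_meet _ _ = cutS j (podot a b)); last first.
      by apply: skel_eq; rewrite /= cut_I2 //; lia.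
    by rewrite Hjoin //; move: ha hb; rewrite /Pj => -> -> /=; rewrite andbF.
- move=> a b x; apply: ord_ext => j; rewrite PC pl_oplusE.
  case: (posnP j) => [->|j0]; first by rewrite P0.
  case: (leqP j n) => jn; last by rewrite Pbig //; apply/esym/negbTE; rewrite -ltnNge; lia.
  set wa := nat_of_ord (Phi h a x); set wb := nat_of_ord (Phi h b x).
  case: (leqP j (wa + wb)) => hj.
  + rewrite (_ : j <= minn n (wa + wb)); last by rewrite leq_min jn hj.
    have ha : Pj h a x wa by rewrite -PC.
    have hb : Pj h b x wb by rewrite -PC.
    have := Hmeet hh x (skel_meet (cutS wa a) (cutS wb b)) (cutS j (poplus a b)).
    rewrite (_ : skel_meet (skel_meet _ _) _ = skel_meet (cutS wa a) (cutS wb b)); last first.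
      by apply: skel_eq; rewrite /= cut_I3.
    by rewrite !Hmeet //; move: ha hb; rewrite /Pj => -> -> /= <-.
  + rewrite (_ : j <= minn n (wa + wb) = false); last by apply/negbTE; rewrite leq_min negb_and -!ltnNge hj orbT.
    have ha : Pj h a x wa.+1 = false by rewrite -PC ltnn.
    have hb : Pj h b x wb.+1 = false by rewrite -PC ltnn.
    have := Hmeet hh x (cutS j (poplus a b)) (skel_join (cutS wa.+1 a) (cutS wb.+1 b)).
    rewrite (_ : skel_meet _ _ = cutS j (poplus a b)); last first.
      by apply: skel_eq; rewrite /= cut_I4 //; lia.
    by rewrite Hjoin //; move: ha hb; rewrite /Pj => -> -> /=; rewrite andbF.
- move=> x; apply: ord_ext => j; rewrite PC pl_zeroE.
  case: (posnP j) => [->|j0]; first by rewrite P0.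
  rewrite /Pj (_ : cutS j pzero = skel_bot A) ?(Hbot hh); last by apply: skel_eq; rewrite /= cut_zero.
  by apply/esym/negbTE; rewrite -ltnNge.
- move=> x; apply: ord_ext => j; rewrite PC pl_oneE.
  case: (leqP j n) => jn; last by rewrite Pbig.
  by rewrite /Pj (_ : cutS j pone = skel_top A) ?(Htop hh); last by apply: skel_eq; rewrite /= cut_one.
Qed.

Lemma Psi_rep (A : pmv n) (L : dl) (phi : A -> dual L -> 'I_n.+1) : is_phom phi ->
  forall s x, sval x (Psi phi s) = (phi (sval s) x == ord_max).
Proof.
move=> hp s; rewrite /Psi.
apply: (@epsilon_spec L (inhabits lbot) (fun l => forall x : dual L, sval x l = (phi (sval s) x == ord_max))).
have [cont mono] := phom_in hp (sval s).
apply: rep.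
- move=> x y hxy /eqP e; have := mono x y hxy; rewrite e.
  move=> /= h; apply/eqP; apply: ord_inj; have := ltn_ord (phi (sval s) y); rewrite /=; lia.
- exact: (cont (fun w => is_true (w == ord_max))).
- exact: (cont (fun w => is_true (w != ord_max))).
Qed.

Lemma maxE (u : 'I_n.+1) : (u == ord_max) = (n <= u).
Proof. by rewrite -val_eqE /= eqn_leq -ltnS ltn_ord. Qed.

Lemma Psi_hom (A : pmv n) (L : dl) (phi : A -> dual L -> 'I_n.+1) : is_phom phi ->
  is_skelhom (Psi phi).
Proof.
move=> hp; have R := Psi_rep hp.
split.
- move=> s t; apply: rep_uniq => x; rewrite xmeet !R /= (phom_min hp) !maxE pl_minE.
  by rewrite leq_min.
- move=> s t; apply: rep_uniq => x; rewrite xjoin !R /= (phom_max hp) !maxE pl_maxE.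
  by rewrite leq_max.
- apply: rep_uniq => x; rewrite xbot !R /= (phom_zero hp) maxE pl_zeroE.
  by apply/negbTE; rewrite -ltnNge.
- by apply: rep_uniq => x; rewrite xtop !R /= (phom_one hp) maxE /= leqnn.
Qed.

Lemma Psi_Phi (A : pmv n) (L : dl) (h : skel A -> L) : is_skelhom h ->
  forall s, Psi (Phi h) s = h s.
Proof.
move=> hh s; apply: rep_uniq => x.
rewrite (Psi_rep (Phi_hom hh)) maxE (Phi_char hh) /Pj.
by rewrite (_ : cutS n (sval s) = s) //; apply: skel_eq; rewrite /= (cut_skel n0 (svalP s)) // n0 leqnn.
Qed.

Lemma Phi_Psi (A : pmv n) (L : dl) (phi : A -> dual L -> 'I_n.+1) : is_phom phi ->
  forall a x, Phi (Psi phi) a x = phi a x.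
Proof.
move=> hp a x; apply: ord_ext => j.
rewrite (Phi_char (Psi_hom hp)) /Pj (Psi_rep hp) /= (phom_cut n0 hp) /sv.
case: ifP => //= jn; first by rewrite eqxx.
by apply/negbTE; rewrite -val_eqE /= eq_sym -lt0n.
Qed.

Lemma Phi_nat (A A' : pmv n) (g : A' -> A) (hg : is_pmvhom g)
  (L L' : dl) (f : L -> L') (hf : is_dlhom f) (h : skel A -> L) (a' : A') (x' : dual L') :
  Phi (fun s => f (h (skel_map hg s))) a' x' = Phi h (g a') (dual_map hf x').
Proof.
rewrite /Phi; congr inord; apply: eq_count => j; rewrite /Pj /=.
by rewrite (_ : skel_map hg (cutS j a') = cutS j (g a')) //; apply: skel_eq; rewrite /= (hom_cut hg).
Qed.
End Main.

Theorem theorem4p7 (n : nat) : (0 < n)%N ->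
  exists (Phi : forall (A : pmv n) (L : dl), (skel A -> L) -> A -> dual L -> 'I_n.+1)
         (Psi : forall (A : pmv n) (L : dl), (A -> dual L -> 'I_n.+1) -> skel A -> L),
    [/\ (* Phi maps DL(S A, L) into PMV_n(A, P L) *)
        (forall A L h, is_skelhom h -> is_phom (Phi A L h)),
        (* Psi maps PMV_n(A, P L) into DL(S A, L) *)
        (forall A L phi, is_phom phi -> is_skelhom (Psi A L phi)),
        (* they are mutually inverse *)
        (forall A L h, is_skelhom h -> forall s, Psi A L (Phi A L h) s = h s),
        (forall A L phi, is_phom phi ->
           forall a x, Phi A L (Psi A L phi) a x = phi a x)
      & (* naturality in A and L:
           Phi (f o h o S g) = P f o Phi h o g *)
        forall (A A' : pmv n) (g : A' -> A) (hg : is_pmvhom g)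
               (L L' : dl) (f : L -> L') (hf : is_dlhom f)
               (h : skel A -> L), is_skelhom h ->
          forall (a' : A') (x' : dual L'),
            Phi A' L' (fun s => f (h (skel_map hg s))) a' x'
            = Phi A L h (g a') (dual_map hf x')].
Proof.
move=> n0.
exists (fun A L h => Phi n0 h), (fun A L phi => Psi phi); split.
- by move=> A L h hh; apply: Phi_hom.
- by move=> A L phi hp; apply: Psi_hom.
- by move=> A L h hh s; apply: Psi_Phi.
- by move=> A L phi hp a x; apply: Phi_Psi.
- by move=> A A' g hg L L' f hf h hh a' x'; apply: Phi_nat.
Qed.
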